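(* In the standing setup below, for every color $\lambda\in\Lambda$ the cycle $\mathsf D_\lambda$ contains an outer edge.
   Context: Colored graphs: a (colored) graph is a finite set of pairs $(e,\alpha)$ with the $e$'s pairwise distinct 2-element vertex subsets $uv$ and $\alpha$ colors (repeats allowed); $V(\cdot),E(\cdot),\chi(\cdot)$ are vertex set, underlying uncolored edge set, color set; rainbow means $|\chi(\mathsf G)|=|\mathsf G|$, almost rainbow means $|\chi(\mathsf G)|=|\mathsf G|-1$; subgraphs are subsets; $\mathsf G+\mathsf e=\mathsf G\cup\{\mathsf e\}$, $\mathsf G-\mathsf e=\mathsf G\setminus\{\mathsf e\}$. Paths/cycles/trees are colored graphs whose underlying edges form a path (two distinct terminals)/cycle/tree; lengths count edges. A long rainbow odd cycle is a rainbow cycle of odd length $\ge7$. A theta graph is a union of three paths with the same terminals $s\ne t$, pairwise sharing no vertex except $s,t$ and no underlying edge; a bad piece is an almost rainbow theta graph with $\ge6$ vertices that is the union of three rainbow such paths. A partition of a graph $\mathsf G$ is a collection of graphs (parts) with union $\mathsf G$, any two sharing at most one vertex and no color. A Frankenstein graph is a graph with a partition $\{\mathsf C_1,..,\mathsf C_c,\mathsf B_1,..,\mathsf B_b,\mathsf T_1,..,\mathsf T_t\}$ ($c+b+t\ge1$) into long rainbow odd cycles $\mathsf C_i$, bad pieces $\mathsf B_i$ and pairwise vertex-disjoint rainbow trees $\mathsf T_i$, having no rainbow even cycle as a subgraph. For a tree $\mathsf T$ with $V(\mathsf T)\subset\mathbb Z_{>0}$, its root is $\min V(\mathsf T)$ and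 $\mathrm{depth}_{\mathsf T}(v)$ is the length of the path in $\mathsf T$ from the root to $v$; the total depth $\mathrm{Depth}(\mathfrak F)$ of a Frankenstein graph is $\sum_{i=1}^t\sum_{v\in V(\mathsf T_i)}\mathrm{depth}_{\mathsf T_i}(v)$. Standing setup: $n\ge1$, $m=\lfloor 6(n-1)/5\rfloor+1$, and $\mathcal D=(\mathsf D_1,\dots,\mathsf D_m)$ is a family of even cycles on $[n]=\{1,\dots,n\}$, all edges of $\mathsf D_i$ having color $i$, such that no rainbow even cycle is a subgraph of $\bigcup_i\mathsf D_i$ (a subgraph of $\mathcal D$ means a simple graph $\subseteq\bigcup_i\mathsf D_i$). Two edges are coincident if they have the same vertex pair and different colors. $\mathfrak F_*$ is a Frankenstein subgraph of $\mathcal D$ (with partition) chosen to maximize $c$, then $b$, then $|\mathfrak F_*|$, then to minimize $\mathrm{Depth}(\mathfrak F_* )$; its partition is $\{\mathsf C_1,..,\mathsf C_c,\mathsf B_1,..,\mathsf B_b,\mathsf T_1,..,\mathsf T_t\}$. Let $\Lambda=\{1,\dots,m\}\setminus\chi(\mathfrak F_* )$. An outer edge is an edge $\mathsf f$ of $\bigcup_{\lambda\in\Lambda}\mathsf D_\lambda$ such that no edge of $\mathfrak F_*$ is coincident to $\mathsf f$. An outer cycle of an outer edge $\mathsf f$ is a rainbow cycle of length $3$ or $5$ in $\mathfrak F_*+\mathsf f$ containing $\mathsf f$. *)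

(* Defs.v *)
From Stdlib Require Import ClassicalEpsilon.
From mathcomp Require Import all_boot.
Set Implicit Arguments.
Unset Strict Implicit.
Unset Printing Implicit Defensive.

Section ColoredGraphs.
Variable n : nat.          (* vertex set [n], represented as 'I_n *)
Variable C : finType.

(* a colored edge: (underlying vertex pair, color) *)
Definition cedge := ({set 'I_n} * C)%type.
Definition cgraph := {set cedge}.

Definition is_cgraph (G : cgraph) : Prop :=
  (forall e, e \in G -> #|e.1| = 2) /\ {in G &, injective (fun e : cedge => e.1)}.

Definition uE (G : cgraph) : {set {set 'I_n}} := [set e.1 | e in G].
Definition uV (G : cgraph) : {set 'I_n} := \bigcup_(e in G) e.1.
Definition colors (G : cgraph) : {set C} := [set e.2 | e in G].

Definition rainbow (G : cgraph) : Prop := #|colors G| = #|G|.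
Definition almost_rainbow (G : cgraph) : Prop := #|colors G| + 1 = #|G|.

(* path with terminals s and t (s <> t follows from uniq and q nonempty) *)
Definition is_path (G : cgraph) (s t : 'I_n) : Prop :=
  is_cgraph G /\
  exists q : seq 'I_n,
    [/\ q != [::], uniq (s :: q), last s q = t &
        uE G = [set [set e.1; e.2] | e in zip (s :: q) q]].

Definition is_cycle (G : cgraph) : Prop :=
  is_cgraph G /\
  exists p : seq 'I_n,
    [/\ 3 <= size p, uniq p &
        uE G = [set [set e.1; e.2] | e in zip p (rot 1 p)]].

Definition adj (G : cgraph) : rel 'I_n := fun x y => [set x; y] \in uE G.

Definition is_tree (G : cgraph) : Prop :=
  [/\ is_cgraph G, G != set0,
      (forall u v, u \in uV G -> v \in uV G -> connect (adj G) u v) &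
      (forall H : cgraph, H \subset G -> ~ is_cycle H)].

Definition long_rainbow_odd_cycle (G : cgraph) : Prop :=
  [/\ is_cycle G, rainbow G, odd #|G| & (7 <= #|G|)].

Definition is_theta_of (B P1 P2 P3 : cgraph) (s t : 'I_n) : Prop :=
  [/\ s != t, [/\ is_path P1 s t, is_path P2 s t & is_path P3 s t],
      B = P1 :|: P2 :|: P3,
      [/\ uV P1 :&: uV P2 \subset [set s; t],
          uV P1 :&: uV P3 \subset [set s; t] &
          uV P2 :&: uV P3 \subset [set s; t]] &
      [/\ [disjoint uE P1 & uE P2],
          [disjoint uE P1 & uE P3] &
          [disjoint uE P2 & uE P3]]].

Definition bad_piece (B : cgraph) : Prop :=
  [/\ almost_rainbow B, 6 <= #|uV B| &
      exists (s t : 'I_n) (P1 P2 P3 : cgraph), [/\ is_theta_of B P1 P2 P3 s t,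
                               rainbow P1, rainbow P2 & rainbow P3]].

Definition no_rainbow_even_cycle (G : cgraph) : Prop :=
  forall H : cgraph, H \subset G -> is_cycle H -> rainbow H -> odd #|H|.

Definition is_partition (G : cgraph) (ps : seq cgraph) : Prop :=
  \bigcup_(P <- ps) P = G /\
  forall i j, i < size ps -> j < size ps -> i != j ->
    #|uV (nth set0 ps i) :&: uV (nth set0 ps j)| <= 1 /\
    [disjoint colors (nth set0 ps i) & colors (nth set0 ps j)].

Definition frankenstein (G : cgraph) (Cs Bs Ts : seq cgraph) : Prop :=
  [/\ is_cgraph G, 1 <= size Cs + size Bs + size Ts,
      is_partition G (Cs ++ Bs ++ Ts),
      [/\ (forall P : cgraph, P \in Cs -> long_rainbow_odd_cycle P),
      (forall P : cgraph, P \in Bs -> bad_piece P),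
      (forall P : cgraph, P \in Ts -> is_tree P /\ rainbow P) &
      (forall i j, i < size Ts -> j < size Ts -> i != j ->
         [disjoint uV (nth set0 Ts i) & uV (nth set0 Ts j)])] &
      no_rainbow_even_cycle G].

Definition is_root (T : cgraph) (r : 'I_n) : Prop :=
  r \in uV T /\ forall u, u \in uV T -> (r <= u)%N.

Definition depth (T : cgraph) (v : 'I_n) : nat :=
  match excluded_middle_informative
          (exists P : cgraph, P \subset T /\ exists r, is_root T r /\ is_path P r v) with
  | left H => #|proj1_sig (constructive_indefinite_description _ H)|
  | right _ => 0
  end.

Definition Depth (Ts : seq cgraph) : nat :=
  \sum_(T <- Ts) \sum_(v in uV T) depth T v.

End ColoredGraphs.

(* number of colors *)
Definition mcol (n : nat) : nat := (6 * (n - 1)) %/ 5 + 1.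

Section Setup.
Variable n : nat.
Local Notation m := (mcol n).
Local Notation E := (cedge n 'I_m).

Definition unionD (D : 'I_m -> {set E}) : {set E} := \bigcup_(i : 'I_m) D i.

Definition even_cycle_family (D : 'I_m -> {set E}) : Prop :=
  (forall i, [/\ is_cycle (D i), ~~ odd #|D i| & forall e, e \in D i -> e.2 = i]) /\
  no_rainbow_even_cycle (unionD D).

Definition subgraph_of_D (D : 'I_m -> {set E}) (G : {set E}) : Prop :=
  is_cgraph G /\ G \subset unionD D.

Definition frank_sub (D : 'I_m -> {set E}) (G : {set E}) (Cs Bs Ts : seq {set E}) :=
  subgraph_of_D D G /\ frankenstein G Cs Bs Ts.

Definition better (G' : {set E}) (Cs' Bs' Ts' : seq {set E})
                  (G : {set E}) (Cs Bs Ts : seq {set E}) : Prop :=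
  size Cs < size Cs' \/
  (size Cs' = size Cs /\
   (size Bs < size Bs' \/
    (size Bs' = size Bs /\
     (#|G| < #|G'| \/ (#|G'| = #|G| /\ Depth Ts' < Depth Ts))))).

Definition optimal_frankenstein (D : 'I_m -> {set E}) (F : {set E})
           (Cs Bs Ts : seq {set E}) : Prop :=
  frank_sub D F Cs Bs Ts /\
  forall G' Cs' Bs' Ts', frank_sub D G' Cs' Bs' Ts' -> ~ better G' Cs' Bs' Ts' F Cs Bs Ts.

Definition coincident (f g : E) : bool := (f.1 == g.1) && (f.2 != g.2).

Definition outer_edge (D : 'I_m -> {set E}) (F : {set E}) (f : E) : Prop :=
  f \in \bigcup_(l : 'I_m | l \notin colors F) D l /\
  forall g, g \in F -> ~~ coincident g f.

End Setup.

(* Main.v *)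
Require Import Defs.
From mathcomp Require Import all_boot.
From Stdlib Require Import Classical.
Set Implicit Arguments.
Unset Strict Implicit.
Unset Printing Implicit Defensive.

Section Gen.
Variable n : nat.
Variable C : finType.
Local Notation E := (cedge n C).

Definition WE (x : 'I_n) (q : seq 'I_n) : {set {set 'I_n}} :=
  [set [set e.1; e.2] | e in zip (x :: q) q].

Lemma WE_nil x : WE x [::] = set0.
Proof. by apply/setP=> y; rewrite in_set0; apply/imsetP; case=> ?; rewrite in_nil. Qed.

Lemma WE_cons x y l : WE x (y :: l) = [set x; y] |: WE y l.
Proof.
rewrite /WE /=; apply/setP=> F; rewrite in_setU1; apply/imsetP/idP.
- case=> e; rewrite inE => /orP[/eqP -> -> | He ->]; first by rewrite eqxx.
  apply/orP; right; apply/imsetP. exists e => //.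
- case/orP => [/eqP -> | /imsetP [e He ->]]; first by exists (x, y); rewrite ?inE ?eqxx.
  by exists e => //; rewrite in_cons He orbT.
Qed.

Lemma WE_cat x l1 l2 : WE x (l1 ++ l2) = WE x l1 :|: WE (last x l1) l2.
Proof.
elim: l1 x => [|y l IH] x /=; first by rewrite WE_nil set0U.
by rewrite !WE_cons IH setUA.
Qed.

Lemma WE_rcons x l y : WE x (rcons l y) = WE x l :|: [set [set last x l; y]].
Proof. by rewrite -cats1 WE_cat WE_cons WE_nil setU0. Qed.

Lemma pairC (a b : 'I_n) : [set a; b] = [set b; a].
Proof. by apply/setP=> z; rewrite !inE orbC. Qed.

Lemma last_rev_belast (z y : 'I_n) l : last z (rev (belast y l)) = if l is [::] then z else y.
Proof. by case: l => [|w l] //=; rewrite rev_cons last_rcons. Qed.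

Lemma WE_rev x l : WE (last x l) (rev (belast x l)) = WE x l.
Proof.
elim: l x => [|y l IH] x /=; first by rewrite !WE_nil.
rewrite rev_cons WE_rcons IH WE_cons last_rev_belast.
case: l IH => [|w l] IH /=; first by rewrite WE_nil set0U setU0 pairC.
by rewrite setUC pairC.
Qed.

Lemma mem_WE v x q : v \in x :: q -> q != [::] -> exists2 F, F \in WE x q & v \in F.
Proof.
elim: q x => [|y l IH] x //= Hv _.
rewrite WE_cons.
move: Hv; rewrite !inE => /orP[/eqP -> | /orP[/eqP -> | Hl]].
- by exists [set x; y]; rewrite ?inE ?eqxx.
- by exists [set x; y]; rewrite ?inE ?eqxx ?orbT.
- have Hv' : v \in y :: l by rewrite inE Hl orbT.
  have Hl' : l != [::] by case: l Hl IH Hv'.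
  have [F HF HvF] := IH y Hv' Hl'.
  by exists F => //; rewrite in_setU1 HF orbT.
Qed.

Lemma zip_cat_l (A B : Type) (s u : seq A) (t : seq B) :
  size t <= size s -> zip (s ++ u) t = zip s t.
Proof.
elim: s t => [|a s IH] [|b t] //=; first by case: u.
by move=> H; rewrite IH.
Qed.

Lemma CE_cons x p : [set [set e.1; e.2] | e in zip (x :: p) (rot 1 (x :: p))]
  = WE x (rcons p x).
Proof.
rewrite rot1_cons /WE.
have -> : x :: rcons p x = (x :: p) ++ [:: x] by rewrite -cats1.
by rewrite zip_cat_l // size_rcons.
Qed.

Lemma cgraph_sub (G H : {set E}) : is_cgraph G -> H \subset G -> is_cgraph H.
Proof.
move=> [H1 H2] /subsetP Hs; split; first by move=> e He; apply: H1; apply: Hs.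
by move=> x y Hx Hy; apply: H2; apply: Hs.
Qed.

Lemma card_uE (G : {set E}) : is_cgraph G -> #|uE G| = #|G|.
Proof. by move=> [_ H]; rewrite /uE card_in_imset. Qed.

Lemma rainbowP (G : {set E}) : rainbow G <-> {in G &, injective (fun e : E => e.2)}.
Proof.
rewrite /rainbow /colors; split.
- by move=> H; apply/imset_injP; rewrite H.
- by move=> H; apply/eqP/imset_injP.
Qed.

Lemma not_rainbow (G : {set E}) : ~ rainbow G ->
  exists g1 g2, [/\ g1 \in G, g2 \in G, g1 != g2 & g1.2 = g2.2].
Proof.
move=> Hn; apply: NNPP => Hne; apply: Hn; apply/rainbowP => x y Hx Hy Hxy.
case: (eqVneq x y) => // Hneq; exfalso; apply: Hne; by exists x, y.
Qed.

Lemma uV_of (P : {set E}) x q v : uE P = WE x q -> q != [::] -> v \in x :: q -> v \in uV P.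
Proof.
move=> HP Hq Hv; have [F HF HvF] := mem_WE Hv Hq.
move: HF; rewrite -HP => /imsetP [e He HeF].
by apply/bigcupP; exists e => //; rewrite -HeF.
Qed.

Lemma bigcup_seq_mem (ps : seq {set E}) g : g \in \bigcup_(P <- ps) P -> exists2 P, P \in ps & g \in P.
Proof.
elim: ps => [|P ps IH]; first by rewrite big_nil inE.
rewrite big_cons inE => /orP[H | H]; first by exists P; rewrite ?inE ?eqxx.
by have [Q HQ HgQ] := IH H; exists Q; rewrite ?inE ?HQ ?orbT.
Qed.

Lemma bigcup_seq_sub (ps : seq {set E}) P : P \in ps -> P \subset \bigcup_(Q <- ps) Q.
Proof.
elim: ps => [|Q ps IH] //; rewrite inE big_cons => /orP[/eqP -> | H].
- exact: subsetUl.
- exact: subset_trans (IH H) (subsetUr _ _).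
Qed.


Lemma two_paths (Pi Pj : {set E}) s t :
  is_cgraph (Pi :|: Pj) -> is_path Pi s t -> is_path Pj s t ->
  uV Pi :&: uV Pj \subset [set s; t] -> [disjoint uE Pi & uE Pj] ->
  is_cycle (Pi :|: Pj) /\ #|Pi :|: Pj| = #|Pi| + #|Pj|.
Proof.
move=> Hcg [_ [qi [Hqi0 Hui Hli HEi]]] [_ [qj [Hqj0 Huj Hlj HEj]]] HV HEd.
have HEi' : uE Pi = WE s qi := HEi.
have HEj' : uE Pj = WE s qj := HEj.
split; last first.
  apply/eqP; rewrite -cardsUI.
  suff -> : Pi :&: Pj = set0 by rewrite cards0 addn0.
  apply/setP=> g; rewrite inE in_set0; apply/negP => /andP[H1 H2].
  have H1' : g.1 \in uE Pi by apply/imsetP; exists g.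
  have H2' : g.1 \in uE Pj by apply/imsetP; exists g.
  by rewrite (disjointFr HEd H1') in H2'.
split=> //.
case: qj Hqj0 Huj Hlj HEj HEj' => [//|y l] _ Huj Hlj HEj HEj'.
rewrite /= in Hlj.
have Huj' := Huj; rewrite (lastI y l) Hlj /= in Huj'.
move: Huj'; rewrite mem_rcons inE negb_or rcons_uniq => /andP[/andP[Hst Hsb] /andP[Htb Hub]].
move: (Hui) => /= /andP[Hsi Hqiu].
exists (s :: qi ++ rev (belast y l)); split.
- rewrite /= size_cat size_rev size_belast.
  case Hsz: (size qi + size l) => [|[|k]] //; exfalso.
  + by move: Hsz Hqi0; case: (qi).
  + clear HEi Hui Hsi Hqiu; move: Hsz; case: qi Hqi0 Hli HEi' => [//|a [|b q']] _ Hli HEi' //=.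
    clear HEj Huj Hsb Htb Hub; case: l Hlj HEj' => [|w l'] Hlj HEj' //= _.
    rewrite /= in Hli Hlj; subst a y.
    have H1 : [set s; t] \in uE Pi by rewrite HEi' WE_cons in_setU1 eqxx.
    have H2 : [set s; t] \in uE Pj by rewrite HEj' WE_cons in_setU1 eqxx.
    by rewrite (disjointFr HEd H1) in H2.
- rewrite /= mem_cat mem_rev negb_or Hsi Hsb /= cat_uniq rev_uniq Hqiu Hub andbT /=.
  apply/hasPn => v; rewrite mem_rev => Hvb; apply/negP => Hvi.
  have HvPi : v \in uV Pi by apply: (uV_of HEi' Hqi0); rewrite inE Hvi orbT.
  have HvPj : v \in uV Pj.
    apply: (uV_of HEj') => //; rewrite (lastI y l) Hlj !inE mem_rcons inE Hvb !orbT //.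
  have := subsetP HV v; rewrite inE HvPi HvPj => /(_ isT); rewrite !inE => /orP[/eqP Hv|/eqP Hv].
  + by rewrite -Hv Hvb in Hsb.
  + by rewrite -Hv Hvb in Htb.
- rewrite /uE imsetU -/(uE Pi) -/(uE Pj) CE_cons rcons_cat WE_cat HEi' Hli.
  have -> : rcons (rev (belast y l)) s = rev (belast s (y :: l)) by rewrite /= rev_cons.
  have -> : t = last s (y :: l) by [].
  by rewrite WE_rev HEj'.
Qed.


Lemma theta_even (B P1 P2 P3 : {set E}) s t : is_cgraph B -> is_theta_of B P1 P2 P3 s t ->
  exists Q : {set E}, [/\ Q \subset B, is_cycle Q & ~~ odd #|Q|].
Proof.
move=> HB [_ [H1 H2 H3] HBe [V12 V13 V23] [E12 E13 E23]].
have key : forall Pi Pj, is_path Pi s t -> is_path Pj s t ->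
   uV Pi :&: uV Pj \subset [set s; t] -> [disjoint uE Pi & uE Pj] ->
   Pi :|: Pj \subset B -> odd #|Pi| = odd #|Pj| ->
   exists Q : {set E}, [/\ Q \subset B, is_cycle Q & ~~ odd #|Q|].
  move=> Pi Pj Hi Hj HV HE Hs Hodd.
  have [Hc Hcard] := two_paths (cgraph_sub HB Hs) Hi Hj HV HE.
  exists (Pi :|: Pj); split=> //.
  by rewrite Hcard oddD Hodd addbb.
have S12 : P1 :|: P2 \subset B by rewrite HBe subsetUl.
have S13 : P1 :|: P3 \subset B by rewrite HBe -setUA (setUC P2) setUA subsetUl.
have S23 : P2 :|: P3 \subset B by rewrite HBe -setUA subsetUr.
case E1: (odd #|P1| == odd #|P2|); first by apply: key H1 H2 V12 E12 S12 (eqP E1).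
case E2: (odd #|P1| == odd #|P3|); first by apply: key H1 H3 V13 E13 S13 (eqP E2).
apply: key H2 H3 V23 E23 S23 _.
by move: E1 E2; case: (odd #|P1|); case: (odd #|P2|); case: (odd #|P3|).
Qed.

End Gen.

Theorem proposition3p1 (n : nat) (D : 'I_(mcol n) -> {set cedge n 'I_(mcol n)})
  (F : {set cedge n 'I_(mcol n)}) (Cs Bs Ts : seq {set cedge n 'I_(mcol n)}) :
  1 <= n ->
  even_cycle_family D ->
  optimal_frankenstein D F Cs Bs Ts ->
  forall lam : 'I_(mcol n), lam \notin colors F ->
    exists f, f \in D lam /\ outer_edge D F f.
Proof.
move=> _ [HD HnoD] [[[HFcg HFsub] [_ _ [Hunion Hparts] [HC HB HT _] HnoF]] _] lam Hlam.
apply: NNPP => Hno.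
have Hco : forall f, f \in D lam -> exists2 g, g \in F & g.1 = f.1.
  move=> f Hf; apply: NNPP => Hng; apply: Hno; exists f; split => //; split.
  - by apply/bigcupP; exists lam.
  - move=> g Hg; apply/negP => /andP[/eqP H1 _]; apply: Hng; by exists g.
have [HDcyc HDev HDcol] := HD lam.
set H := [set g in F | g.1 \in uE (D lam)].
have HHsub : H \subset F by apply/subsetP => g; rewrite inE => /andP[].
have HHcg := cgraph_sub HFcg HHsub.
have HuE : uE H = uE (D lam).
  apply/setP=> X; apply/imsetP/imsetP.
  - by case=> g; rewrite inE => /andP[_ /imsetP [f Hf Hgf]] ->; exists f.
  - case=> f Hf ->; have [g Hg Hgf] := Hco f Hf; exists g => //.
    by rewrite inE Hg Hgf; apply/imsetP; exists f.
have HHcyc : is_cycle H.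
  split => //; case: HDcyc => _ [p [Hp1 Hp2 Hp3]]; exists p; split => //.
  by rewrite HuE.
have HHcard : #|H| = #|D lam|.
  by rewrite -(card_uE HHcg) HuE card_uE //; case: HDcyc.
have HnotR : ~ rainbow H.
  by move=> Hr; have := HnoF H HHsub HHcyc Hr; rewrite HHcard (negbTE HDev).
have [g1 [g2 [Hg1 Hg2 Hg12 Hc12]]] := not_rainbow HnotR.
have Hg1F : g1 \in F by apply: (subsetP HHsub).
have Hg2F : g2 \in F by apply: (subsetP HHsub).
set ps := Cs ++ Bs ++ Ts.
have [P HP Hg1P] : exists2 P, P \in ps & g1 \in P by apply: bigcup_seq_mem; rewrite Hunion.
have [P' HP' Hg2P'] : exists2 P, P \in ps & g2 \in P by apply: bigcup_seq_mem; rewrite Hunion.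
have HPP' : P = P'.
  have Hi := nth_index set0 HP; have Hj := nth_index set0 HP'.
  case: (eqVneq (index P ps) (index P' ps)) => Hij.
    by rewrite -Hi -Hj Hij.
  have [_ Hdis] := Hparts _ _ (etrans (index_mem _ _) HP) (etrans (index_mem _ _) HP') Hij.
  rewrite Hi Hj in Hdis.
  have Hc1 : g1.2 \in colors P by apply/imsetP; exists g1.
  have Hc2 : g1.2 \in colors P' by apply/imsetP; exists g2.
  by rewrite (disjointFr Hdis Hc1) in Hc2.
subst P'.
have Hinj : forall Q : {set cedge n 'I_(mcol n)}, rainbow Q -> g1 \in Q -> g2 \in Q -> False.
  by move=> Q /rainbowP HQ Q1 Q2; move/eqP: Hg12; apply; apply: HQ.
move: HP; rewrite !mem_cat => /orP[HPC | /orP[HPB | HPT]].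
- by case: (HC P HPC) => _ Hr _ _; apply: Hinj Hr Hg1P Hg2P'.
- have [Har _ [s [t [P1 [P2 [P3 [Hth _ _ _]]]]]]] := HB P HPB.
  have HPF : P \subset F by rewrite -Hunion; apply: bigcup_seq_sub; rewrite !mem_cat HPB orbT.
  have [Q [HQP HQcyc HQev]] := theta_even (cgraph_sub HFcg HPF) Hth.
  have HQF := subset_trans HQP HPF.
  have HinjP : {in P :\ g1 &, injective (fun e : cedge n 'I_(mcol n) => e.2)}.
    apply/rainbowP; rewrite /rainbow.
    have -> : colors (P :\ g1) = colors P.
      apply/setP => c; apply/imsetP/imsetP.
      - by case=> e; rewrite in_setD1 => /andP[_ He] ->; exists e.
      - case=> e He ->; case: (eqVneq e g1) => [Heg|Heg].
        + by exists g2; [rewrite in_setD1 eq_sym Hg12 Hg2P' | rewrite Heg].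
        + by exists e; rewrite // in_setD1 Heg.
    have := cardsD1 g1 P; rewrite Hg1P /=; move: Har; rewrite /almost_rainbow.
    move=> Ha Hc; rewrite Hc add1n addn1 in Ha; by case: Ha.
  have Hg1Q : g1 \in Q.
    apply: NNPP => Hn.
    have HnR : ~ rainbow Q.
      by move=> Hr; have := HnoF Q HQF HQcyc Hr; rewrite (negbTE HQev).
    have [z [w [Hz Hw Hzw Hczw]]] := not_rainbow HnR.
    move/eqP: Hzw; apply; apply: HinjP => //; rewrite in_setD1 ?(subsetP HQP z Hz) ?(subsetP HQP w Hw) andbT.
    + by apply/eqP => Hz1; apply: Hn; rewrite -Hz1.
    + by apply/eqP => Hz1; apply: Hn; rewrite -Hz1.
  have [e1 He1 He1g] : exists2 e, e \in D lam & g1.1 = e.1.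
    by move: Hg1; rewrite inE => /andP[_ /imsetP].
  set Q' := e1 |: (Q :\ g1).
  have He1col := HDcol e1 He1.
  have He1nF : forall g, g \in F -> g.2 != lam.
    move=> g Hg; apply/eqP => Hgl; move: Hlam; rewrite -Hgl.
    by rewrite (imset_f (fun e : cedge n 'I_(mcol n) => e.2) Hg).
  have He1notin : e1 \notin Q :\ g1.
    apply/negP => H'; have : e1 \in F.
      by apply: (subsetP HQF); move: H'; rewrite in_setD1 => /andP[].
    by move/He1nF; rewrite He1col eqxx.
  have Hcard' : #|Q'| = #|Q| by rewrite cardsU1 He1notin (cardsD1 g1 Q) Hg1Q.
  have HQ'cyc : is_cycle Q'.
    case: HQcyc => [[Hsz Hin] [p [Hp1 Hp2 Hp3]]]; split; last first.
      exists p; split=> //; rewrite -Hp3.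
      have -> : uE Q = g1.1 |: [set e.1 | e in Q :\ g1] by rewrite /uE -{1}(setD1K Hg1Q) imsetU1.
      by rewrite /uE imsetU1 -He1g.
    split.
    - move=> e; rewrite in_setU1 => /orP[/eqP -> | ]; first by rewrite -He1g; apply: Hsz.
      by rewrite in_setD1 => /andP[_ He]; apply: Hsz.
    - move=> x y; rewrite !in_setU1 !in_setD1.
      case/orP => [/eqP-> | /andP[Hx1 Hx]]; case/orP => [/eqP-> | /andP[Hy1 Hy]] //= Hxy.
      + by exfalso; move/eqP: Hy1; apply; symmetry; apply: Hin => //; rewrite He1g.
      + by exfalso; move/eqP: Hx1; apply; apply: Hin => //; rewrite He1g.
      + by apply: Hin.
  have HQ'r : rainbow Q'.
    apply/rainbowP => x y; rewrite !in_setU1.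
    have HsubF : forall z, z \in Q :\ g1 -> z \in F.
      by move=> z; rewrite in_setD1 => /andP[_ Hz]; apply: (subsetP HQF).
    have HsubP : forall z, z \in Q :\ g1 -> z \in P :\ g1.
      by move=> z; rewrite !in_setD1 => /andP[Hz1 Hz]; rewrite Hz1 (subsetP HQP).
    case/orP => [/eqP-> | Hx]; case/orP => [/eqP-> | Hy] //= Hxy.
    + by exfalso; move: (He1nF y (HsubF y Hy)); rewrite -Hxy He1col eqxx.
    + by exfalso; move: (He1nF x (HsubF x Hx)); rewrite Hxy He1col eqxx.
    + by apply: HinjP; rewrite ?HsubP.
  have HQ'sub : Q' \subset unionD D.
    apply/subsetP=> x; rewrite in_setU1 => /orP[/eqP-> | Hx].
    + by apply/bigcupP; exists lam.
    + by apply: (subsetP HFsub); apply: (subsetP HQF); move: Hx; rewrite in_setD1 => /andP[].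
  by have := HnoD Q' HQ'sub HQ'cyc HQ'r; rewrite Hcard' (negbTE HQev).
- by case: (HT P HPT) => _ Hr; apply: Hinj Hr Hg1P Hg2P'.
Qed.
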